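(* For $\mu\in\Lambda$ with dominant representative $\mu^+\in W\mu$, the following are equivalent: (1) $\langle\alpha^\vee,\mu\rangle\geqslant-1$ for every positive root $\alpha^\vee\in\Delta^\vee_+$; (2) for every dominant $\lambda'\in\Lambda^+$, the inequalities $\mu\leqslant\lambda'\leqslant\mu^+$ imply $\lambda'=\mu^+$.
   Context: $G$ connected reductive over $\mathbb C$ with maximal torus $T$ and Borel $B$; $\Lambda$ coweight lattice, $\Lambda^+$ dominant coweights, $W$ Weyl group, $\Delta^\vee_+$ positive roots, $\langle\cdot,\cdot\rangle$ the pairing; $\mu\leqslant\lambda$ means $\lambda-\mu$ is a nonnegative integer combination of simple coroots; $\mu^+$ denotes the unique dominant element of $W\mu$. *)

(* Defs.v *)
(* Abstract (reduced) root datum of rank n, realized on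
   X^* = Z^n (characters, where the roots live) and Lambda = Z^n (coweights /
   cocharacters, where the coroots live), with the standard pairing. *)
From HB Require Import structures.
From mathcomp Require Import all_boot all_order all_algebra.
Set Implicit Arguments. Unset Strict Implicit. Unset Printing Implicit Defensive.
Import Order.TTheory GRing.Theory Num.Theory.
Local Open Scope ring_scope.

Definition pair (n : nat) (x y : 'rV[int]_n) : int := \sum_(k < n) x 0 k * y 0 k.

Definition refl (n r : nat) (alpha alphav : 'I_r -> 'rV[int]_n) (i : 'I_r)
  (x : 'rV[int]_n) : 'rV[int]_n := x - pair x (alphav i) *: alpha i.
Definition reflv (n r : nat) (alpha alphav : 'I_r -> 'rV[int]_n) (i : 'I_r)
  (y : 'rV[int]_n) : 'rV[int]_n := y - pair (alpha i) y *: alphav i.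

(* (X^*, Phi = {alpha i}, Lambda, Phi^v = {alphav i}) is a reduced root datum,
   with alpha i |-> alphav i the bijection Phi -> Phi^v *)
Definition is_root_datum (n r : nat) (alpha alphav : 'I_r -> 'rV[int]_n) : Prop :=
  (injective alpha /\ injective alphav) /\ [/\
      (forall i, pair (alpha i) (alphav i) = 2),
      (forall i j, exists k, alpha k = refl alpha alphav i (alpha j)),
      (forall i j, exists k, alphav k = reflv alpha alphav i (alphav j))
    & (forall i j (c : int), alpha j = c *: alpha i -> c = 1 \/ c = -1)].

Definition is_base (n r : nat) (alpha : 'I_r -> 'rV[int]_n) (simple : pred 'I_r) : Prop :=
  (forall c : 'I_r -> int, \sum_(i | simple i) c i *: alpha i = 0 ->
     forall i, simple i -> c i = 0) /\
  (forall j, exists c : 'I_r -> int,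
     alpha j = \sum_(i | simple i) c i *: alpha i /\
     ((forall i, simple i -> 0 <= c i) \/ (forall i, simple i -> c i <= 0))).

Definition positive_root (n r : nat) (alpha : 'I_r -> 'rV[int]_n) (simple : pred 'I_r)
  (j : 'I_r) : Prop :=
  exists c : 'I_r -> int, alpha j = \sum_(i | simple i) c i *: alpha i /\
    (forall i, simple i -> 0 <= c i).

Definition dominant (n r : nat) (alpha : 'I_r -> 'rV[int]_n) (simple : pred 'I_r)
  (lam : 'rV[int]_n) : Prop :=
  forall i, simple i -> 0 <= pair (alpha i) lam.

Definition coweight_le (n r : nat) (alphav : 'I_r -> 'rV[int]_n) (simple : pred 'I_r)
  (mu lam : 'rV[int]_n) : Prop :=
  exists c : 'I_r -> nat, lam - mu = \sum_(i | simple i) alphav i *+ c i.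

Definition in_W_orbit (n r : nat) (alpha alphav : 'I_r -> 'rV[int]_n)
  (mu nu : 'rV[int]_n) : Prop :=
  exists s : seq 'I_r, nu = foldr (fun i x => reflv alpha alphav i x) mu s.

(* Main.v *)
Require Import Defs.
From HB Require Import structures.
From mathcomp Require Import all_boot all_order all_algebra.
From mathcomp Require Import ring lra zify.
From Stdlib Require Import Classical ClassicalEpsilon.
Import Order.TTheory GRing.Theory Num.Theory.
Set Implicit Arguments. Unset Strict Implicit. Unset Printing Implicit Defensive.
Local Open Scope ring_scope.

Section Pair.
Variable n : nat.
Implicit Types x y z : 'rV[int]_n.

Lemma pairDl x y z : pair (x + y) z = pair x z + pair y z.
Proof. by rewrite /pair -big_split; apply: eq_bigr => k _; rewrite mxE mulrDl. Qed.
Lemma pairDr x y z : pair x (y + z) = pair x y + pair x z.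
Proof. by rewrite /pair -big_split; apply: eq_bigr => k _; rewrite mxE mulrDr. Qed.
Lemma pairZl (c : int) x y : pair (c *: x) y = c * pair x y.
Proof. by rewrite /pair mulr_sumr; apply: eq_bigr => k _; rewrite mxE mulrA. Qed.
Lemma pairZr (c : int) x y : pair x (c *: y) = c * pair x y.
Proof. by rewrite /pair mulr_sumr; apply: eq_bigr => k _; rewrite mxE mulrCA. Qed.
Lemma pair0l y : pair 0 y = 0.
Proof. by rewrite /pair big1 // => k _; rewrite mxE mul0r. Qed.
Lemma pair0r y : pair y 0 = 0.
Proof. by rewrite /pair big1 // => k _; rewrite mxE mulr0. Qed.
Lemma pairNl x y : pair (- x) y = - pair x y.
Proof. by rewrite -scaleN1r pairZl mulN1r. Qed.
Lemma pairNr x y : pair x (- y) = - pair x y.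
Proof. by rewrite -scaleN1r pairZr mulN1r. Qed.
Lemma pairBl x y z : pair (x - y) z = pair x z - pair y z.
Proof. by rewrite pairDl pairNl. Qed.
Lemma pairBr x y z : pair x (y - z) = pair x y - pair x z.
Proof. by rewrite pairDr pairNr. Qed.
Lemma pairMnl x y m : pair (x *+ m) y = pair x y *+ m.
Proof. by elim: m => [|m IH]; rewrite ?mulr0n ?pair0l // !mulrS pairDl IH. Qed.
Lemma pairMnr x y m : pair y (x *+ m) = pair y x *+ m.
Proof. by elim: m => [|m IH]; rewrite ?mulr0n ?pair0r // !mulrS pairDr IH. Qed.
Lemma pair_suml (I : finType) (P : pred I) (F : I -> 'rV[int]_n) y :
  pair (\sum_(i | P i) F i) y = \sum_(i | P i) pair (F i) y.
Proof. exact: (big_morph (fun x => pair x y) (fun a b => pairDl a b y) (pair0l y)). Qed.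
Lemma pair_sumr (I : finType) (P : pred I) (F : I -> 'rV[int]_n) y :
  pair y (\sum_(i | P i) F i) = \sum_(i | P i) pair y (F i).
Proof. exact: (big_morph (fun x => pair y x) (fun a b => pairDr y a b) (pair0r y)). Qed.
Lemma pair_eq0 x : (forall y, pair x y = 0) -> x = 0.
Proof.
move=> H; apply/rowP => k; rewrite mxE; have := H (delta_mx 0 k).
rewrite /pair (bigD1 k) //= big1 ?addr0 => [|l lk]; first by rewrite mxE !eqxx mulr1.
by rewrite mxE (negbTE lk) andbF mulr0.
Qed.
Lemma pair_eq0r x : (forall y, pair y x = 0) -> x = 0.
Proof.
move=> H; apply/rowP => k; rewrite mxE; have := H (delta_mx 0 k).
rewrite /pair (bigD1 k) //= big1 ?addr0 => [|l lk]; first by rewrite mxE !eqxx mul1r.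
by rewrite mxE (negbTE lk) andbF mul0r.
Qed.
End Pair.

Section Root.
Variables (n r : nat) (alpha alphav : 'I_r -> 'rV[int]_n) (simple : pred 'I_r).
Hypothesis hRD : is_root_datum alpha alphav.
Hypothesis hB : is_base alpha simple.

Local Notation rc := (refl alpha alphav).
Local Notation rv := (reflv alpha alphav).
Implicit Types x y z : 'rV[int]_n.

Lemma alpha_inj : injective alpha. Proof. by case: hRD => [[]]. Qed.
Lemma alphav_inj : injective alphav. Proof. by case: hRD => [[]]. Qed.
Lemma pair_aa i : pair (alpha i) (alphav i) = 2. Proof. by case: hRD => _ []. Qed.
Lemma reduced i j (c : int) : alpha j = c *: alpha i -> c = 1 \/ c = -1.
Proof. by case: hRD => _ [] _ _ _; apply. Qed.

Lemma rc_pair i x y : pair (rc i x) y = pair x (rv i y).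
Proof. by rewrite /refl /reflv pairBl pairBr pairZl pairZr mulrC. Qed.
Lemma rcK i : involutive (rc i).
Proof.
move=> x; rewrite {1}/refl pairBl pairZl pair_aa /refl.
set t := pair x (alphav i).
rewrite -addrA -opprD -scalerDl; have ->: t + (t - t * 2) = 0 by ring.
by rewrite scale0r subr0.
Qed.
Lemma rvK i : involutive (rv i).
Proof.
move=> x; rewrite {1}/reflv pairBr pairZr pair_aa /reflv.
set t := pair (alpha i) x.
rewrite -addrA -opprD -scalerDl; have ->: t + (t - t * 2) = 0 by ring.
by rewrite scale0r subr0.
Qed.
Lemma rcD i x y : rc i (x + y) = rc i x + rc i y.
Proof. by rewrite /refl pairDl scalerDl opprD addrACA. Qed.
Lemma rcZ i (c : int) x : rc i (c *: x) = c *: rc i x.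
Proof. by rewrite /refl pairZl scalerBr scalerA. Qed.
Lemma rcN i x : rc i (- x) = - rc i x.
Proof. by rewrite -!scaleN1r rcZ. Qed.
Lemma rcB i x y : rc i (x - y) = rc i x - rc i y.
Proof. by rewrite rcD rcN. Qed.
Lemma rvD i x y : rv i (x + y) = rv i x + rv i y.
Proof. by rewrite /reflv pairDr scalerDl opprD addrACA. Qed.
Lemma rvZ i (c : int) x : rv i (c *: x) = c *: rv i x.
Proof. by rewrite /reflv pairZr scalerBr scalerA. Qed.
Lemma rvN i x : rv i (- x) = - rv i x.
Proof. by rewrite -!scaleN1r rvZ. Qed.
Lemma rvB i x y : rv i (x - y) = rv i x - rv i y.
Proof. by rewrite rvD rvN. Qed.
Lemma rv0 i : rv i 0 = 0.
Proof. by rewrite /reflv pair0r scale0r subr0. Qed.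
Lemma rvMn i x m : rv i (x *+ m) = rv i x *+ m.
Proof. by elim: m => [|m IH]; rewrite ?mulr0n ?rv0 // !mulrS rvD IH. Qed.
Lemma rv_sum i (I : finType) (P : pred I) (F : I -> 'rV[int]_n) :
  rv i (\sum_(k | P k) F k) = \sum_(k | P k) rv i (F k).
Proof. exact: (big_morph (rv i) (rvD i) (rv0 i)). Qed.
Lemma rc_aa i : rc i (alpha i) = - alpha i.
Proof. by rewrite /refl pair_aa -[X in X - _]scale1r -scalerBl scaleN1r. Qed.
Lemma rv_aa i : rv i (alphav i) = - alphav i.
Proof. by rewrite /reflv pair_aa -[X in X - _]scale1r -scalerBl scaleN1r. Qed.

Lemma closure_c i j : exists k, alpha k = rc i (alpha j).
Proof. by case: hRD => _ [] _ H _ _. Qed.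
Lemma closure_v i j : exists k, alphav k = rv i (alphav j).
Proof. by case: hRD => _ [] _ _ H _. Qed.

Definition sig i j := odflt j [pick k | alpha k == rc i (alpha j)].
Lemma sigE i j : alpha (sig i j) = rc i (alpha j).
Proof.
rewrite /sig; case: pickP => [k /eqP //| H]; exfalso.
by have [k Hk] := closure_c i j; have := H k; rewrite Hk eqxx.
Qed.
Lemma sigK i : involutive (sig i).
Proof. by move=> j; apply: alpha_inj; rewrite !sigE rcK. Qed.
Lemma sig_inj i : injective (sig i).
Proof. exact: (inv_inj (sigK i)). Qed.
Lemma sig_aa i : alpha (sig i i) = - alpha i.
Proof. by rewrite sigE rc_aa. Qed.

Definition Bf y z := \sum_(j < r) pair (alpha j) y * pair (alpha j) z.
Lemma BC y z : Bf y z = Bf z y.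
Proof. by apply: eq_bigr => j _; rewrite mulrC. Qed.
Lemma BDl x y z : Bf (x + y) z = Bf x z + Bf y z.
Proof. by rewrite /Bf -big_split; apply: eq_bigr => j _; rewrite pairDr mulrDl. Qed.
Lemma BZl (c : int) y z : Bf (c *: y) z = c * Bf y z.
Proof. by rewrite /Bf mulr_sumr; apply: eq_bigr => j _; rewrite pairZr mulrA. Qed.
Lemma BNl y z : Bf (- y) z = - Bf y z.
Proof. by rewrite -scaleN1r BZl mulN1r. Qed.
Lemma BBl x y z : Bf (x - y) z = Bf x z - Bf y z.
Proof. by rewrite BDl BNl. Qed.
Lemma B0l z : Bf 0 z = 0.
Proof. by rewrite -(scale0r (0 : 'rV[int]_n)) BZl mul0r. Qed.
Lemma BDr x y z : Bf z (x + y) = Bf z x + Bf z y.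
Proof. by rewrite BC BDl !(BC z). Qed.
Lemma BZr (c : int) y z : Bf z (c *: y) = c * Bf z y.
Proof. by rewrite BC BZl BC. Qed.
Lemma BNr y z : Bf z (- y) = - Bf z y.
Proof. by rewrite BC BNl BC. Qed.
Lemma BBr x y z : Bf z (x - y) = Bf z x - Bf z y.
Proof. by rewrite BDr BNr. Qed.
Lemma B0r z : Bf z 0 = 0.
Proof. by rewrite BC B0l. Qed.
Lemma BMnl y z m : Bf (y *+ m) z = Bf y z *+ m.
Proof. by elim: m => [|m IH]; rewrite ?mulr0n ?B0l // !mulrS BDl IH. Qed.
Lemma BMnr y z m : Bf z (y *+ m) = Bf z y *+ m.
Proof. by rewrite BC BMnl BC. Qed.
Lemma B_suml (I : finType) (P : pred I) (F : I -> 'rV[int]_n) z :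
  Bf (\sum_(k | P k) F k) z = \sum_(k | P k) Bf (F k) z.
Proof. exact: (big_morph (fun y => Bf y z) (fun a b => BDl a b z) (B0l z)). Qed.
Lemma B_sumr (I : finType) (P : pred I) (F : I -> 'rV[int]_n) z :
  Bf z (\sum_(k | P k) F k) = \sum_(k | P k) Bf z (F k).
Proof. exact: (big_morph (fun y => Bf z y) (fun a b => BDr a b z) (B0r z)). Qed.
Lemma B_ge0 y : 0 <= Bf y y.
Proof. by apply: sumr_ge0 => j _; rewrite -expr2 sqr_ge0. Qed.
Lemma Binv i y z : Bf (rv i y) (rv i z) = Bf y z.
Proof.
rewrite /Bf; under eq_bigr do rewrite -!rc_pair -!sigE.
by rewrite [RHS](reindex_inj (@sig_inj i)).
Qed.
Definition NN i := Bf (alphav i) (alphav i).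
Lemma Bid i y : 2 * Bf (alphav i) y = pair (alpha i) y * NN i.
Proof.
have := Binv i (alphav i) y; rewrite rv_aa /reflv BNl BBr BZr -/(NN i) => H.
move: H; set b := Bf _ y; set c := _ * NN i => H.
have -> : 2 * b = b + b by ring.
by rewrite -{1}H; ring.
Qed.
Lemma NN_ge4 i : 4 <= NN i.
Proof.
rewrite /NN /Bf (bigD1 i) //= pair_aa ler_wpDr //.
by apply: sumr_ge0 => j _; rewrite -expr2 sqr_ge0.
Qed.
Lemma NN_gt0 i : 0 < NN i.
Proof. by apply: lt_le_trans (NN_ge4 i). Qed.

Lemma scal_inj (c : int) x y : c != 0 -> c *: x = c *: y -> x = y.
Proof.
move=> c0 /rowP H; apply/rowP => k; have := H k; rewrite !mxE.
exact: mulfI.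
Qed.

Definition phi y := \sum_(j < r) pair (alpha j) y *: alpha j.
Lemma pair_phi y z : pair (phi y) z = Bf y z.
Proof. by rewrite /phi pair_suml; apply: eq_bigr => j _; rewrite pairZl. Qed.
Lemma phi_alphav i : 2 *: phi (alphav i) = NN i *: alpha i.
Proof.
apply: subr0_eq; apply: pair_eq0 => z.
by rewrite pairBl !pairZl pair_phi Bid [X in _ - X]mulrC subrr.
Qed.
Lemma phiD y z : phi (y + z) = phi y + phi z.
Proof. by rewrite /phi -big_split; apply: eq_bigr => j _; rewrite pairDr scalerDl. Qed.
Lemma phi0 : phi 0 = 0.
Proof. by rewrite /phi big1 // => j _; rewrite pair0r scale0r. Qed.
Lemma phiZ (c : int) y : phi (c *: y) = c *: phi y.
Proof. by rewrite /phi scaler_sumr; apply: eq_bigr => j _; rewrite pairZr scalerA. Qed.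
Lemma phi_sum (I : finType) (P : pred I) (F : I -> 'rV[int]_n) :
  phi (\sum_(k | P k) F k) = \sum_(k | P k) phi (F k).
Proof. exact: (big_morph phi phiD phi0). Qed.
Lemma phi_rv i y : phi (rv i y) = rc i (phi y).
Proof.
rewrite /phi; under eq_bigr do rewrite -rc_pair -sigE.
rewrite (reindex_inj (@sig_inj i)) /=.
have rc0 : rc i 0 = 0 by rewrite /refl pair0l scale0r subr0.
rewrite (big_morph (rc i) (rcD i) rc0); apply: eq_bigr => l _.
by rewrite sigK rcZ sigE.
Qed.

Lemma indep (c : 'I_r -> int) :
  \sum_(i | simple i) c i *: alpha i = 0 -> forall i, simple i -> c i = 0.
Proof. by case: hB => H _; apply: H. Qed.

Lemma nondeg (c : 'I_r -> int) :
  Bf (\sum_(i | simple i) c i *: alphav i) (\sum_(i | simple i) c i *: alphav i) = 0 ->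
  forall i, simple i -> c i = 0.
Proof.
set x := \sum_(i | _) _ => H0.
have Hp : forall j, pair (alpha j) x = 0.
  move=> j; move/eqP: H0; rewrite /Bf psumr_eq0 => [/allP Hall|k _]; last by rewrite -expr2 sqr_ge0.
  have := Hall j (mem_index_enum j); rewrite implyTb mulf_eq0 orbb => /eqP //.
have Hphi : phi x = 0 by rewrite /phi big1 // => j _; rewrite Hp scale0r.
have : 2 *: phi x = \sum_(i | simple i) (c i * NN i) *: alpha i.
  rewrite /x phi_sum scaler_sumr; apply: eq_bigr => i _.
by rewrite phiZ scalerA [2 * _]mulrC -[(c i * 2) *: _]scalerA phi_alphav scalerA.
rewrite Hphi scaler0 => /esym /indep H i si.
by have /eqP := H i si; rewrite mulf_eq0 (gt_eqF (NN_gt0 i)) orbF => /eqP.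
Qed.

Lemma indepv (c : 'I_r -> int) :
  \sum_(i | simple i) c i *: alphav i = 0 -> forall i, simple i -> c i = 0.
Proof. by move=> H; apply: nondeg; rewrite H B0l. Qed.

Lemma compat i j : alphav (sig i j) = rv i (alphav j).
Proof.
have [m Hm] := closure_v i j.
suff: alpha m = alpha (sig i j) by move/alpha_inj <-.
set k := sig i j.
have A : NN m *: alpha m = NN j *: alpha k.
  by rewrite -phi_alphav Hm phi_rv -rcZ phi_alphav rcZ sigE.
have E1 : NN m * 2 = NN j * pair (alpha k) (alphav m).
  by have := congr1 (fun v => pair v (alphav m)) A; rewrite !pairZl pair_aa.
have E2 : NN m * pair (alpha m) (alphav k) = NN j * 2.
  by have := congr1 (fun v => pair v (alphav k)) A; rewrite !pairZl pair_aa.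
move: E1 E2; set t := pair (alpha k) (alphav m); set s := pair (alpha m) (alphav k) => E1 E2.
have Nm := NN_gt0 m; have Nj := NN_gt0 j.
have ts : t * s = 4.
  have NZ : NN j * NN m != 0 by rewrite mulf_eq0 !gt_eqF.
  apply: (mulIf NZ).
  have -> : t * s * (NN j * NN m) = (NN j * t) * (NN m * s) by ring.
  by rewrite -E1 E2; ring.
have tp : 0 < t.
  have : 0 < NN j * t by rewrite -E1 mulr_gt0.
  by rewrite pmulr_rgt0.
have sp : 0 < s.
  have : 0 < t * s by rewrite ts.
  by rewrite pmulr_rgt0.
have tle : t <= 4 by nia.
have : t = 1 \/ t = 2 \/ t = 4.
  have : t = 1 \/ t = 2 \/ t = 3 \/ t = 4 by lia.
  case=> [->|[->|[t3|->]]]; [by left|by right;left| |by right;right].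
  by exfalso; move: ts; rewrite t3 => ts; lia.
case=> [t1|[t2|t4]].
- exfalso; move: E1; rewrite t1 mulr1 => E1.
  move: A; rewrite -E1 -scalerA => /(scal_inj (lt0r_neq0 Nm)) /reduced.
  by case.
- apply: (scal_inj (lt0r_neq0 Nm)); rewrite A; congr (_ *: _).
  by apply: (mulIf (_ : 2 != 0)) => //; rewrite E1 t2.
- exfalso; move: E1; rewrite t4 => E1.
  have E3 : NN m = NN j * 2 by nia.
  move: A; rewrite E3 -scalerA => /(scal_inj (lt0r_neq0 Nj)) /esym /reduced.
  by case.
Qed.

Definition posv x := exists c : 'I_r -> int,
  x = \sum_(i | simple i) c i *: alpha i /\ (forall i, simple i -> 0 <= c i).
Definition negv x := posv (- x).

Lemma alpha_neq0 j : alpha j != 0.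
Proof. by apply/eqP => H; have := pair_aa j; rewrite H pair0l. Qed.

Lemma root_posneg j : posv (alpha j) \/ negv (alpha j).
Proof.
case: hB => _ /(_ j) [c [E [H|H]]]; [by left; exists c|right].
exists (fun i => - c i); split; last by move=> i /H; rewrite oppr_ge0.
by rewrite E -sumrN; apply: eq_bigr => i _; rewrite scaleNr.
Qed.

Lemma coef_uniq (c d : 'I_r -> int) :
  \sum_(i | simple i) c i *: alpha i = \sum_(i | simple i) d i *: alpha i ->
  forall i, simple i -> c i = d i.
Proof.
move=> E i si; apply/eqP; rewrite -subr_eq0; apply/eqP.
suff H : \sum_(l | simple l) (c l - d l) *: alpha l = 0 by have := indep H si.
by rewrite (eq_bigr (fun l => c l *: alpha l - d l *: alpha l)) ?sumrB ?E ?subrr // => l _; rewrite scalerBl.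
Qed.

Lemma posneg_excl x : posv x -> negv x -> x = 0.
Proof.
case=> c [Ec Hc] [d [Ed Hd]].
have E : \sum_(i | simple i) (c i + d i) *: alpha i = \sum_(i | simple i) 0 *: alpha i.
  rewrite (eq_bigr (fun l => c l *: alpha l + d l *: alpha l)) ?big_split /=; last by move=> l _; rewrite scalerDl.
  by rewrite -Ec -Ed subrr big1 // => l _; rewrite scale0r.
rewrite Ec big1 // => i si; have := coef_uniq E si => /eqP.
by rewrite paddr_eq0 ?Hc ?Hd // => /andP [/eqP -> _]; rewrite scale0r.
Qed.

Lemma sum_upd (F : 'I_r -> 'rV[int]_n) (c : 'I_r -> int) i a : simple i ->
  \sum_(l | simple l) (if l == i then c l + a else c l) *: F l =
  \sum_(l | simple l) c l *: F l + a *: F i.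
Proof.
move=> si; rewrite (bigD1 i) //= eqxx [in RHS](bigD1 i) //= scalerDl -!addrA; congr (_ + _).
rewrite addrC; congr (_ + _); apply: eq_bigr => l /andP [_ /negbTE ->] //.
Qed.

Lemma simple_pos i : simple i -> posv (alpha i).
Proof.
move=> si; exists (fun l => (l == i)%:R); split; last by move=> l _; case: (l == i).
rewrite (bigD1 i) //= eqxx scale1r big1 ?addr0 // => l /andP [_ /negbTE ->].
by rewrite scale0r.
Qed.

Lemma F2 i j (c : 'I_r -> int) : simple i -> alpha j = \sum_(l | simple l) c l *: alpha l ->
  (forall l, simple l -> 0 <= c l) -> j != i ->
  let c' := fun l => if l == i then c l + - pair (alpha j) (alphav i) else c l in
  rc i (alpha j) = \sum_(l | simple l) c' l *: alpha l /\ (forall l, simple l -> 0 <= c' l).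
Proof.
move=> si Ej Hc ji c'.
have E : rc i (alpha j) = \sum_(l | simple l) c' l *: alpha l.
  by rewrite /c' sum_upd // -Ej /refl scaleNr.
split => //.
case: (root_posneg (sig i j)); rewrite sigE.
  case=> d [Ed Hd] l sl; rewrite (coef_uniq (c := c') (d := d)) ?Hd // -E //.
case=> d [Ed Hd]; exfalso.
have Hneg : forall l, simple l -> c' l = - d l.
  apply: coef_uniq; rewrite -E -[LHS]opprK Ed -sumrN.
  by apply: eq_bigr => l _; rewrite scaleNr.
have H0 : forall l, simple l -> l != i -> c l = 0.
  move=> l sl li; apply/eqP; rewrite eq_le Hc // andbT.
  have := Hneg l sl; rewrite /c' (negbTE li) => ->; rewrite oppr_le0 Hd //.
have Eji : alpha j = c i *: alpha i.
  rewrite Ej (bigD1 i) //= big1 ?addr0 // => l /andP [sl li].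
  by rewrite H0 // scale0r.
case: (reduced Eji) => ci.
  by move: ji; rewrite -(alpha_inj (_ : alpha j = alpha i)) ?eqxx // Eji ci scale1r.
by have := Hc i si; rewrite ci.
Qed.

Lemma pos_dom x lam : posv x -> dominant alpha simple lam -> 0 <= pair x lam.
Proof.
case=> c [-> Hc] Hd; rewrite pair_suml; apply: sumr_ge0 => i si.
by rewrite pairZl mulr_ge0 ?Hc ?Hd.
Qed.
Lemma neg_dom x lam : negv x -> dominant alpha simple lam -> pair x lam <= 0.
Proof. by move=> H Hd; have := pos_dom H Hd; rewrite pairNl oppr_ge0. Qed.

Definition actv (w : seq 'I_r) y := foldr (fun i x => rv i x) y w.
Definition actc (w : seq 'I_r) x := foldr (fun i x => rc i x) x w.
Definition sigw (w : seq 'I_r) j := foldr (fun i k => sig i k) j w.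

Lemma sigwE w j : alpha (sigw w j) = actc w (alpha j).
Proof. by elim: w => //= i w IH; rewrite sigE IH. Qed.
Lemma compatw w j : alphav (sigw w j) = actv w (alphav j).
Proof. by elim: w => //= i w IH; rewrite compat IH. Qed.
Lemma actvD w y z : actv w (y + z) = actv w y + actv w z.
Proof. by elim: w => //= i w IH; rewrite IH rvD. Qed.
Lemma actvZ w (c : int) y : actv w (c *: y) = c *: actv w y.
Proof. by elim: w => //= i w IH; rewrite IH rvZ. Qed.
Lemma actvN w y : actv w (- y) = - actv w y.
Proof. by rewrite -!scaleN1r actvZ. Qed.
Lemma actvB w y z : actv w (y - z) = actv w y - actv w z.
Proof. by rewrite actvD actvN. Qed.
Lemma actcD w y z : actc w (y + z) = actc w y + actc w z.
Proof. by elim: w => //= i w IH; rewrite IH rcD. Qed.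
Lemma actcZ w (c : int) y : actc w (c *: y) = c *: actc w y.
Proof. by elim: w => //= i w IH; rewrite IH rcZ. Qed.
Lemma actcN w y : actc w (- y) = - actc w y.
Proof. by rewrite -!scaleN1r actcZ. Qed.
Lemma actcB w y z : actc w (y - z) = actc w y - actc w z.
Proof. by rewrite actcD actcN. Qed.
Lemma pair_rcrv i x y : pair (rc i x) (rv i y) = pair x y.
Proof. by rewrite rc_pair rvK. Qed.
Lemma pair_inv w x y : pair (actc w x) (actv w y) = pair x y.
Proof. by elim: w => //= i w IH; rewrite pair_rcrv IH. Qed.
Lemma Binvw w y z : Bf (actv w y) (actv w z) = Bf y z.
Proof. by elim: w => //= i w IH; rewrite Binv IH. Qed.
Lemma actv_cat w1 w2 y : actv (w1 ++ w2) y = actv w1 (actv w2 y).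
Proof. by rewrite /actv foldr_cat. Qed.
Lemma actv_rcons w i y : actv (rcons w i) y = actv w (rv i y).
Proof. by rewrite /actv foldr_rcons. Qed.
Lemma actc_rcons w i y : actc (rcons w i) y = actc w (rc i y).
Proof. by rewrite /actc foldr_rcons. Qed.
Lemma actv_rev w y : actv (rev w) (actv w y) = y.
Proof. by elim: w y => //= i w IH y; rewrite rev_cons actv_rcons rvK IH. Qed.

Lemma conj_w v i j : alpha (sigw v i) = alpha j ->
  (forall y, rv j (actv v y) = actv v (rv i y)) /\
  (forall x, rc j (actc v x) = actc v (rc i x)).
Proof.
move=> E; have Ek := alpha_inj E.
have Ev : alphav j = actv v (alphav i) by rewrite -Ek compatw.
have Ec : alpha j = actc v (alpha i) by rewrite -E sigwE.
split=> [y|x].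
  by rewrite /reflv actvB actvZ Ev Ec pair_inv.
by rewrite /refl actcB actcZ Ev Ec pair_inv.
Qed.

Lemma deletion w i : all simple w -> simple i -> negv (actc w (alpha i)) ->
  exists v, [/\ all simple v, size w = (size v).+1,
    (forall y, actv w y = actv (rcons v i) y) &
    (forall x, actc w x = actc (rcons v i) x)].
Proof.
move=> + si; elim: w => [|j v IH] /=.
  move=> _ Hn; exfalso; move: (posneg_excl (simple_pos si) Hn).
  by apply/eqP; apply: alpha_neq0.
case/andP=> sj sv Hn.
case: (root_posneg (sigw v i)); rewrite sigwE => Hv; last first.
  have [v'' [sv'' sz Ev Ec]] := IH sv Hv.
  exists (j :: v''); split => //=; [by rewrite sj| by rewrite sz| |].
    by move=> y; rewrite /= Ev.
  by move=> x; rewrite /= Ec.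
have Ekj : sigw v i = j.
  apply/eqP; apply/negPn/negP => kj.
  have [c [Ek Hc]] : posv (alpha (sigw v i)) by rewrite sigwE.
  have [E2 H2] := F2 sj Ek Hc kj.
  have P2 : posv (rc j (alpha (sigw v i))) by eexists; split; [exact: E2|exact: H2].
  move: Hn; rewrite -sigwE => Hn.
  have := posneg_excl P2 Hn; rewrite -sigE; apply/eqP; exact: alpha_neq0.
have [Cv Cc] := conj_w (congr1 alpha Ekj).
exists v; split => //.
  by move=> y; rewrite /= Cv actv_rcons.
by move=> x; rewrite /= Cc actc_rcons.
Qed.

Lemma Idw w : all simple w -> (forall i, simple i -> posv (actc w (alpha i))) ->
  forall y, actv w y = y.
Proof.
have [N] := ubnP (size w); elim: N w => // N IH w Hw.
case/lastP: w Hw => [//|v j] Hw.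
rewrite all_rcons => /andP [sj sv] Hp.
have Hn : negv (actc v (alpha j)).
  by have := Hp j sj; rewrite actc_rcons rc_aa actcN.
have [v' [sv' sz Ev Ec]] := deletion sv sj Hn.
have Ec' : forall x, actc (rcons v j) x = actc v' x.
  by move=> x; rewrite actc_rcons Ec actc_rcons rcK.
have Ev' : forall y, actv (rcons v j) y = actv v' y.
  by move=> y; rewrite actv_rcons Ev actv_rcons rvK.
move=> y; rewrite Ev'; apply: IH => //.
  by move: Hw; rewrite size_rcons sz; lia.
by move=> i si; rewrite -Ec'; apply: Hp.
Qed.

Lemma Uniq w lam : all simple w -> dominant alpha simple lam ->
  dominant alpha simple (actv w lam) -> actv w lam = lam.
Proof.
have [N] := ubnP (size w); elim: N w => // N IH w Hw sw Hl Hwl.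
case: (classic (forall i, simple i -> posv (actc w (alpha i)))) => [H|H].
  exact: Idw.
have [i Hi] := not_all_ex_not _ _ H.
have [si Hni] : simple i /\ ~ posv (actc w (alpha i)).
  by split; [apply: NNPP => ns; apply: Hi => /ns | move=> hp; apply: Hi].
have Hn : negv (actc w (alpha i)).
  by case: (root_posneg (sigw w i)); rewrite sigwE.
have Z : pair (alpha i) lam = 0.
  apply/eqP; rewrite eq_le Hl // andbT -(pair_inv w).
  exact: neg_dom.
have Fix : rv i lam = lam by rewrite /reflv Z scale0r subr0.
have [v [sv sz Ev _]] := deletion sw si Hn.
have E : actv w lam = actv v lam by rewrite Ev actv_rcons Fix.
rewrite E; apply: IH => //; first by move: Hw; rewrite sz; lia.
by rewrite -E.
Qed.

Lemma sum_updz (c : 'I_r -> int) i a : simple i ->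
  \sum_(l | simple l) (if l == i then c l + a else c l) = \sum_(l | simple l) c l + a.
Proof.
move=> si; rewrite (bigD1 i) //= eqxx [in RHS](bigD1 i) //= -!addrA; congr (_ + _).
rewrite addrC; congr (_ + _); apply: eq_bigr => l /andP [_ /negbTE ->] //.
Qed.
Lemma sum_updn (F : 'I_r -> 'rV[int]_n) (d : 'I_r -> nat) i m : simple i ->
  \sum_(l | simple l) F l *+ (if l == i then (d l + m)%N else d l) =
  \sum_(l | simple l) F l *+ d l + F i *+ m.
Proof.
move=> si; rewrite (bigD1 i) //= eqxx [in RHS](bigD1 i) //= mulrnDr -!addrA; congr (_ + _).
rewrite addrC; congr (_ + _); apply: eq_bigr => l /andP [_ /negbTE ->] //.
Qed.

Lemma find_simple j (c : 'I_r -> int) : alpha j = \sum_(l | simple l) c l *: alpha l ->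
  (forall l, simple l -> 0 <= c l) ->
  exists i, [/\ simple i, 0 < c i & 0 < pair (alpha i) (alphav j)].
Proof.
move=> Ej Hc; apply: NNPP => H.
have : pair (alpha j) (alphav j) <= 0.
  rewrite Ej pair_suml; apply: sumr_le0 => i si; rewrite pairZl.
  rewrite leNgt; apply/negP => Hp; apply: H; exists i.
  have ci : 0 < c i.
    rewrite lt_def Hc // andbT; apply/eqP => c0; move: Hp; rewrite c0 mul0r ltxx //.
  by split => //; move: Hp; rewrite pmulr_rgt0.
by rewrite pair_aa.
Qed.

Lemma sign_transfer i j : 0 < pair (alpha i) (alphav j) -> 0 < pair (alpha j) (alphav i).
Proof.
move=> H.
have E : pair (alpha i) (alphav j) * NN i = pair (alpha j) (alphav i) * NN j.
  by rewrite -!Bid BC.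
have : 0 < pair (alpha j) (alphav i) * NN j by rewrite -E mulr_gt0 ?NN_gt0.
by rewrite pmulr_lgt0 ?NN_gt0.
Qed.

Lemma G_pos N : forall j (c : 'I_r -> int), alpha j = \sum_(l | simple l) c l *: alpha l ->
  (forall l, simple l -> 0 <= c l) -> \sum_(l | simple l) c l <= N%:Z ->
  (exists w, all simple w /\ forall y, rv j y = actv w y) /\
  (exists d : 'I_r -> nat, alphav j = \sum_(l | simple l) alphav l *+ d l).
Proof.
elim: N => [|N IH] j c Ej Hc HN.
all: case: (boolP (simple j)) => sj.
1,3: split; [exists [:: j]; split; [by rewrite /= sj|by []]|].
1,2: exists (fun l => if l == j then 1%N else 0%N).
1,2: rewrite (bigD1 j) //= eqxx big1 ?addr0 // => l /andP [_ /negbTE ->] //.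
all: have [i [si ci pij]] := find_simple Ej Hc.
all: have qji := sign_transfer pij.
all: have ji : j != i by apply: contraNneq sj => ->.
all: pose c' := fun l => if l == i then c l + - pair (alpha j) (alphav i) else c l.
all: have [E2 H2] : rc i (alpha j) = \sum_(l | simple l) c' l *: alpha l /\
      (forall l, simple l -> 0 <= c' l) := F2 si Ej Hc ji.
all: have Hs : \sum_(l | simple l) c' l = \sum_(l | simple l) c l - pair (alpha j) (alphav i)
      by rewrite sum_updz.
all: have Hs0 : 0 <= \sum_(l | simple l) c' l by apply: sumr_ge0.
1: by exfalso; move: Hs0; rewrite Hs; lia.
have HN' : \sum_(l | simple l) c' l <= N%:Z by rewrite Hs; move: HN; lia.
set k := sig i j.
have Ek : alpha k = \sum_(l | simple l) c' l *: alpha l by rewrite sigE.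
have [[w [sw Hw]] [d Hd]] := IH k c' Ek H2 HN'.
have kij : sig i k = j by rewrite sigK.
have [Cv _] := conj_w (v := [:: i]) (i := k) (j := j) (congr1 alpha kij).
split.
  exists (i :: w ++ [:: i]); split.
    by rewrite /= si all_cat sw /= si.
  move=> y; rewrite -{1}(rvK i y) /= Cv /= Hw actv_cat //.
have [m Hm] : exists m : nat, pair (alpha i) (alphav j) = m%:Z.
  by exists (absz (pair (alpha i) (alphav j))); rewrite gez0_abs // ltW.
exists (fun l => if l == i then (d l + m)%N else d l).
rewrite sum_updn // -Hd -kij compat /reflv.
have -> : pair (alpha i) (alphav k) = - pair (alpha i) (alphav j).
  by rewrite /k compat -rc_pair rc_aa pairNl.
by rewrite Hm scaleNr opprK -natz scaler_nat.
Qed.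

Lemma G j : exists w, all simple w /\ forall y, rv j y = actv w y.
Proof.
have Gp : forall k, posv (alpha k) -> exists w, all simple w /\ forall y, rv k y = actv w y.
  move=> k [c [Ek Hc]].
  have H0 : 0 <= \sum_(l | simple l) c l by apply: sumr_ge0.
  have HN : \sum_(l | simple l) c l <= (absz (\sum_(l | simple l) c l))%:Z by rewrite gez0_abs.
  have [[w Hw] _] := G_pos Ek Hc HN.
  by exists w.
case: (root_posneg j) => [/Gp //|Hn].
have [w [sw Hw]] : exists w, all simple w /\ forall y, rv (sig j j) y = actv w y.
  by apply: Gp; rewrite sig_aa.
exists w; split => // y; rewrite -Hw /reflv compat rv_aa sig_aa.
by rewrite pairNl scalerN scaleNr opprK.
Qed.

Lemma FactA j : posv (alpha j) ->
  exists d : 'I_r -> nat, alphav j = \sum_(l | simple l) alphav l *+ d l.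
Proof.
move=> [c [Ek Hc]].
have H0 : 0 <= \sum_(l | simple l) c l by apply: sumr_ge0.
have HN : \sum_(l | simple l) c l <= (absz (\sum_(l | simple l) c l))%:Z by rewrite gez0_abs.
by have [_ Hd] := G_pos Ek Hc HN.
Qed.

Lemma orbit_simple mu mup : in_W_orbit alpha alphav mu mup ->
  exists w, all simple w /\ mup = actv w mu.
Proof.
case=> s ->; elim: s => [|i s [w [sw E]]]; first by exists [::].
have [g [sg Hg]] := G i.
exists (g ++ w); rewrite all_cat sg sw actv_cat -E -Hg; split => //.
Qed.

Lemma Binv_orbit mu mup : in_W_orbit alpha alphav mu mup -> Bf mup mup = Bf mu mu.
Proof. by case=> s ->; elim: s => //= i s IH; rewrite Binv IH. Qed.

Definition cle y z := coweight_le alphav simple y z.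
Lemma cle_refl y : cle y y.
Proof. by exists (fun _ => 0%N); rewrite subrr big1 // => l _; rewrite mulr0n. Qed.
Lemma cle_trans x y z : cle x y -> cle y z -> cle x z.
Proof.
case=> d1 H1 [d2 H2]; exists (fun l => (d2 l + d1 l)%N).
have -> : z - x = (z - y) + (y - x) by rewrite addrA subrK.
rewrite H1 H2 -big_split /=.
by apply: eq_bigr => l _; rewrite mulrnDr.
Qed.
Lemma cle_add y (d : 'I_r -> nat) : cle y (y + \sum_(l | simple l) alphav l *+ d l).
Proof. by exists d; rewrite addrAC subrr add0r. Qed.

Definition pb j : bool := if excluded_middle_informative (posv (alpha j)) then true else false.
Lemma pbP j : pb j <-> posv (alpha j).
Proof. by rewrite /pb; case: excluded_middle_informative. Qed.

Lemma pos_sig i j : simple i -> pb j -> j != i -> pb (sig i j) && (sig i j != i).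
Proof.
move=> si /pbP [c [Ej Hc]] ji.
have [E2 H2] := F2 si Ej Hc ji.
apply/andP; split.
  by apply/pbP; rewrite sigE; eexists; split; [exact: E2|exact: H2].
apply/eqP => Hs.
have : alpha j = - alpha i by rewrite -(sigK i j) Hs sig_aa.
move=> Eji; have Pj : posv (alpha j) by exists c.
have Nj : negv (alpha j) by rewrite /negv Eji opprK; apply: simple_pos.
by move: (alpha_neq0 j); rewrite (posneg_excl Pj Nj) eqxx.
Qed.

Definition hgt y := \sum_(j | pb j) pair (alpha j) y.

Lemma hgt_step i y : simple i -> hgt (rv i y) = hgt y - 2 * pair (alpha i) y.
Proof.
move=> si; have pi : pb i by apply/pbP; apply: simple_pos.
rewrite /hgt; under eq_bigr do rewrite -rc_pair -sigE.
rewrite (bigD1 i) //= [in RHS](bigD1 i) //= sig_aa pairNl.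
have -> : \sum_(j | pb j && (j != i)) pair (alpha (sig i j)) y =
          \sum_(j | pb j && (j != i)) pair (alpha j) y.
  rewrite [RHS](reindex_inj (@sig_inj i)) /=; apply: eq_bigl => j.
  apply/idP/idP => [/andP [pj ji]|H]; first exact: pos_sig.
  case/andP: H => [pj ji]; have := pos_sig si pj ji; rewrite sigK => /andP [-> /=].
  move=> _; apply/eqP => E; move: pj; rewrite E => /pbP Pn.
  move: ji; rewrite E => _.
  have : negv (alpha (sig i i)) by rewrite sig_aa /negv opprK; apply: simple_pos.
  move=> Nn; by move: (alpha_neq0 (sig i i)); rewrite (posneg_excl Pn Nn) eqxx.
set S := \sum_(j | _) _; ring.
Qed.

Lemma pair_le_B j y : pair (alpha j) y <= Bf y y.
Proof.
have H1 : pair (alpha j) y <= pair (alpha j) y * pair (alpha j) y by nia.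
apply: (le_trans H1); rewrite /Bf (bigD1 j) //= lerDl.
by apply: sumr_ge0 => k _; rewrite -expr2 sqr_ge0.
Qed.

Lemma hgt_le y : hgt y <= Bf y y *+ r.
Proof.
rewrite /hgt big_mkcond /=.
apply: (@le_trans _ _ (\sum_(j < r) Bf y y)).
  by apply: ler_sum => j _; case: (pb j); rewrite ?pair_le_B ?B_ge0.
by rewrite sumr_const card_ord.
Qed.

Lemma raise y : exists u, [/\ all simple u, dominant alpha simple (actv u y) & cle y (actv u y)].
Proof.
suff H : forall M : nat, forall y, Bf y y *+ r - hgt y <= M%:Z ->
   exists u, [/\ all simple u, dominant alpha simple (actv u y) & cle y (actv u y)].
  have H0 : 0 <= Bf y y *+ r - hgt y by rewrite subr_ge0 hgt_le.
  by apply: (H (absz (Bf y y *+ r - hgt y))); rewrite gez0_abs.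
elim=> [|M IH] {}y HM.
all: case: (classic (dominant alpha simple y)) => Hd; first by exists [::]; split => //; apply: cle_refl.
all: have [i [si Hi]] : exists i, simple i /\ pair (alpha i) y < 0.
all: try (apply: NNPP => Hn; apply: Hd => i si; rewrite leNgt; apply/negP => Hl; apply: Hn; by exists i).
all: have [m Hm] : exists m : nat, - pair (alpha i) y = m%:Z
       by exists (absz (- pair (alpha i) y)); rewrite gez0_abs // oppr_ge0 ltW.
all: have Ey : rv i y = y + alphav i *+ m
       by rewrite /reflv -scaleNr Hm -natz scaler_nat.
all: have Hh : hgt (rv i y) = hgt y + 2 * m%:Z by rewrite hgt_step // -Hm; ring.
all: have Hb : Bf (rv i y) (rv i y) = Bf y y by rewrite Binv.
all: have H0 : 0 <= Bf (rv i y) (rv i y) *+ r - hgt (rv i y) by rewrite subr_ge0 hgt_le.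
all: have m1 : (0 < m)%N by move: Hm Hi; lia.
1: by exfalso; move: H0 HM; rewrite Hb Hh; lia.
have HM' : Bf (rv i y) (rv i y) *+ r - hgt (rv i y) <= M%:Z by move: HM; rewrite Hb Hh; lia.
have [u [su Hdu Hcu]] := IH _ HM'.
exists (u ++ [:: i]); split.
- by rewrite all_cat su /= si.
- by rewrite actv_cat.
- rewrite actv_cat /=; apply: cle_trans Hcu; rewrite Ey.
  have := cle_add y (fun l => if l == i then (0 + m)%N else 0%N).
  by rewrite sum_updn // big1 ?add0r // => l _; rewrite mulr0n.
Qed.

Lemma sum_delta (F : 'I_r -> 'rV[int]_n) i : simple i ->
  \sum_(k | simple k) (k == i)%:R *: F k = F i.
Proof.
move=> si; rewrite (bigD1 i) //= eqxx scale1r big1 ?addr0 // => k /andP [_ /negbTE ->].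
by rewrite scale0r.
Qed.
Lemma sum_delta2 (F : 'I_r -> 'rV[int]_n) (a b : int) i l : simple i -> simple l ->
  \sum_(k | simple k) (a * (k == i)%:R + b * (k == l)%:R) *: F k = a *: F i + b *: F l.
Proof.
move=> si sl; under eq_bigr do rewrite scalerDl -!scalerA.
by rewrite big_split /= -!scaler_sumr !sum_delta.
Qed.

Lemma no_diff_root i l k : simple i -> simple l -> i != l -> alpha k = alpha i - alpha l -> False.
Proof.
move=> si sl il Ek.
have Ee : alpha k = \sum_(m | simple m) (1 * (m == i)%:R + (-1) * (m == l)%:R) *: alpha m.
  by rewrite sum_delta2 // scale1r scaleN1r.
case: (root_posneg k) => [[c [Ec Hc]]|[c [Ec Hc]]].
  have := coef_uniq (etrans (esym Ec) Ee) sl.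
  rewrite eq_sym (negbTE il) eqxx mulr0 mulr1 add0r => E.
  by have := Hc l sl; rewrite E.
have Ee' : - alpha k = \sum_(m | simple m) ((-1) * (m == i)%:R + 1 * (m == l)%:R) *: alpha m.
  by rewrite sum_delta2 // scale1r scaleN1r Ek opprB addrC.
have := coef_uniq (etrans (esym Ec) Ee') si.
rewrite (negbTE il) eqxx mulr0 mulr1 addr0 => E.
by have := Hc i si; rewrite E.
Qed.

Lemma F1 i l : simple i -> simple l -> i != l -> pair (alpha i) (alphav l) <= 0.
Proof.
move=> si sl il; rewrite leNgt; apply/negP => apos.
have bpos := sign_transfer apos.
move: apos bpos.
set a := pair (alpha i) (alphav l); set b := pair (alpha l) (alphav i) => apos bpos.
set x := 2 *: alphav i - b *: alphav l.
have h1 : 2 * Bf (alphav i) (alphav l) - a * NN i = 0 by rewrite Bid subrr.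
have h2 : b * NN l - a * NN i = 0.
  by rewrite -Bid BC Bid subrr.
have Ex : Bf x x = NN i * (4 - a * b).
  have E1 : Bf x x = 4 * NN i - 4 * b * Bf (alphav i) (alphav l) + b * b * NN l.
    rewrite /x BBl !BBr !BZl !BZr [Bf (alphav l) (alphav i)]BC -/(NN i) -/(NN l); ring.
  have D : 2 * Bf x x - 2 * (NN i * (4 - a * b)) =
    - 4 * b * (2 * Bf (alphav i) (alphav l) - a * NN i) + 2 * b * (b * NN l - a * NN i).
    by rewrite E1; ring.
  move: D; rewrite h1 h2 !mulr0 addr0 => /eqP; rewrite subr_eq0 => /eqP H.
  by apply: (@mulfI _ 2).
have Hle : a * b <= 4.
  have := B_ge0 x; rewrite Ex pmulr_rge0 ?NN_gt0 //; lia.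
have Hne : a * b != 4.
  apply/eqP => E4; move: Ex; rewrite E4 subrr mulr0 => Ex0.
  have Hx : x = \sum_(k | simple k) (2 * (k == i)%:R + (- b) * (k == l)%:R) *: alphav k.
    by rewrite sum_delta2 // scaleNr.
  have := nondeg (c := fun k => 2 * (k == i)%:R + (- b) * (k == l)%:R).
  by rewrite -Hx Ex0 => /(_ erefl i si); rewrite eqxx (negbTE il) mulr0 addr0.
have : a = 1 \/ b = 1.
  move/eqP: Hne => Hne; nia.
case=> [a1|b1].
  apply: (no_diff_root si sl il (k := sig l i)).
  by rewrite sigE /refl -/a a1 scale1r.
have li : l != i by rewrite eq_sym.
apply: (no_diff_root sl si li (k := sig i l)).
by rewrite sigE /refl -/b b1 scale1r.
Qed.

Lemma natsum_scal (F : 'I_r -> 'rV[int]_n) (c : 'I_r -> nat) :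
  \sum_(l | simple l) F l *+ c l = \sum_(l | simple l) (c l)%:Z *: F l.
Proof. by apply: eq_bigr => l _; rewrite -natz scaler_nat. Qed.

Lemma L1dom lam mup y (c d : 'I_r -> nat) : dominant alpha simple y ->
  lam - y = \sum_(l | simple l) alphav l *+ c l ->
  mup - lam = \sum_(l | simple l) alphav l *+ d l ->
  Bf y y = Bf mup mup -> lam = mup.
Proof.
move=> Dy Hc Hd HB.
pose e := fun l => (c l + d l)%N.
set beta := \sum_(l | simple l) (e l)%:Z *: alphav l.
have Eb : mup = y + beta.
  have -> : mup = y + ((lam - y) + (mup - lam)) by rewrite addrA [y + _]addrC subrK addrC subrK.
  rewrite Hc Hd -big_split /= /beta; congr (_ + _).
  by apply: eq_bigr => l _; rewrite -natz scaler_nat mulrnDr.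
have Hyb : 0 <= Bf y beta.
  rewrite /beta B_sumr; apply: sumr_ge0 => l sl; rewrite BZr mulr_ge0 //.
  have : 0 <= 2 * Bf (alphav l) y by rewrite Bid mulr_ge0 ?Dy // ltW ?NN_gt0.
  by rewrite BC pmulr_rge0.
have Hbb : Bf beta beta = 0.
  move: HB; rewrite Eb BDr !BDl [Bf beta y]BC => HB.
  apply/eqP; rewrite eq_le B_ge0 andbT; move: Hyb HB; lia.
have He := nondeg Hbb.
apply/eqP; rewrite eq_sym -subr_eq0 Hd; apply/eqP; rewrite big1 // => l sl.
have := He l sl; rewrite /e => /eqP; rewrite -natz pnatr_eq0 addn_eq0 => /andP [_ /eqP ->].
by rewrite mulr0n.
Qed.

Lemma L1 lam mup : dominant alpha simple lam -> cle lam mup ->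
  forall N y (c : 'I_r -> nat), (forall j, posv (alpha j) -> -1 <= pair (alpha j) y) ->
  lam - y = \sum_(l | simple l) alphav l *+ c l -> (\sum_(l | simple l) c l)%N = N ->
  Bf y y = Bf mup mup -> lam = mup.
Proof.
move=> Hl [d Hd]; elim=> [|N IH] y c H1 Hc HN HB.
all: case: (classic (dominant alpha simple y)) => Dy; first exact: (L1dom Dy Hc Hd HB).
all: have [i [si Hi]] : exists i, simple i /\ pair (alpha i) y < 0.
all: try (apply: NNPP => Hn; apply: Dy => i si; rewrite leNgt; apply/negP => Hl'; apply: Hn; by exists i).
all: have Hi1 : pair (alpha i) y = -1 by have := H1 i (simple_pos si); move: Hi; lia.
all: have ci : (0 < c i)%N.
all: try (rewrite lt0n; apply/negP => /eqP c0;
  have Hle : pair (alpha i) (lam - y) <= 0 by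
    rewrite Hc pair_sumr; apply: sumr_le0 => l sl; rewrite pairMnr;
    case: (eqVneq l i) => [->|li]; [by rewrite c0 mulr0n|by rewrite mulrn_wle0 // F1 // eq_sym]).
all: try (move: Hle; rewrite pairBr Hi1 => Hle; have := Hl i si; lia).
1: by exfalso; move: HN; rewrite (bigD1 i) //=; lia.
pose c' := fun l => if l == i then (c l).-1 else c l.
have Ec : forall l, c l = if l == i then (c' l + 1)%N else c' l.
  by move=> l; rewrite /c'; case: eqP => // ->; rewrite addn1 prednK.
have Hc' : lam - rv i y = \sum_(l | simple l) alphav l *+ c' l.
  have : lam - y = \sum_(l | simple l) alphav l *+ c' l + alphav i *+ 1.
    by rewrite -sum_updn // Hc; apply: eq_bigr => l _; rewrite -Ec.
  by rewrite /reflv Hi1 scaleN1r opprK mulr1n opprD addrA => ->; rewrite addrK.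
have HN' : (\sum_(l | simple l) c' l)%N = N.
  move: HN; rewrite (bigD1 i) //= [in X in _ -> X](bigD1 i) //= Ec eqxx.
  rewrite (eq_bigr c'); last by move=> l /andP [_ /negbTE li]; rewrite Ec li.
  by rewrite addn1 addSn => [[]].
apply: (IH (rv i y) c') => //; last by rewrite Binv.
move=> j Pj; rewrite -rc_pair -sigE.
case: (eqVneq j i) => [->|ji].
  by rewrite sig_aa pairNl Hi1 opprK.
have /andP [P2 _] := pos_sig si (proj2 (pbP j) Pj) ji.
by apply: H1; apply/pbP.
Qed.

Lemma main_sec mu mup (horb : in_W_orbit alpha alphav mu mup)
  (hdom : dominant alpha simple mup) :
  (forall j, positive_root alpha simple j -> -1 <= pair (alpha j) mu) <->
  (forall lam : 'rV[int]_n, dominant alpha simple lam ->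
     coweight_le alphav simple mu lam -> coweight_le alphav simple lam mup ->
     lam = mup).
Proof.
have Bmu : Bf mup mup = Bf mu mu := Binv_orbit horb.
split.
  move=> H1 lam Hl [c Hc] Hle.
  exact: (L1 Hl Hle (N := (\sum_(l | simple l) c l)%N) (y := mu) H1 Hc).
move=> H2 j Pj; rewrite leNgt; apply/negP => Hlt.
have Hk : pair (alpha j) mu <= -2 by move: Hlt; lia.
have [w [sw Ew]] := orbit_simple horb.
have C : forall v, all simple v -> cle (actv v mu) mup.
  move=> v sv; have [u [su Du Cu]] := raise (actv v mu).
  suff <- : actv u (actv v mu) = mup by [].
  have -> : actv u (actv v mu) = actv (u ++ v ++ rev w) mup.
    by rewrite !actv_cat Ew actv_rev.
  apply: Uniq => //; first by rewrite !all_cat su sv all_rev sw.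
  by rewrite !actv_cat Ew actv_rev.
have [d Hd] := FactA Pj.
set nu := mu + alphav j.
have Cmn : cle mu nu by rewrite /nu Hd; apply: cle_add.
have [u [su Du Cu]] := raise nu.
set lam := actv u nu.
have El : lam = actv u mu + alphav (sigw u j) by rewrite /lam /nu actvD compatw.
have Cml : cle mu lam := cle_trans Cmn Cu.
have Clm : cle lam mup.
  case: (root_posneg (sigw u j)) => Hg.
    have [e He] := FactA Hg.
    have [g [sg Hg']] := G j.
    apply: cle_trans (C (u ++ g) _); last by rewrite all_cat su sg.
    have [k1 Hk1] : exists k1 : nat, - pair (alpha j) mu - 1 = k1%:Z.
      by exists (absz (- pair (alpha j) mu - 1)); rewrite gez0_abs //; lia.
    exists (fun l => (e l * k1)%N).
    rewrite actv_cat -Hg' El /reflv actvB actvZ -compatw.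
    have -> : actv u mu - pair (alpha j) mu *: alphav (sigw u j) - (actv u mu + alphav (sigw u j))
      = (- pair (alpha j) mu - 1) *: alphav (sigw u j).
      by rewrite scalerBl scale1r opprD addrA [actv u mu - _ - actv u mu]addrAC subrr add0r scaleNr.
    rewrite Hk1 He -natz scaler_nat -sumrMnl; apply: eq_bigr => l _.
    by rewrite mulrnA.
  have Pg : posv (alpha (sig (sigw u j) (sigw u j))) by rewrite sig_aa.
  have [e He] := FactA Pg.
  apply: cle_trans (C u su).
  exists e; rewrite -He compat rv_aa El; set A := actv u mu; set B := alphav _.
  by rewrite opprD addrA subrr sub0r.
have Hne : lam != mup.
  apply/eqP => E.
  have : Bf lam lam = Bf mu mu by rewrite E.
  rewrite /lam Binvw /nu BDl !BDr -/(NN j) [Bf (alphav j) mu]BC.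
  have := Bid j mu; rewrite BC; have := NN_gt0 j.
  set b := Bf mu (alphav j); set p := pair _ _; set N := NN j; set bm := Bf mu mu.
  move: Hk; rewrite -/p => Hk; nia.
by move/eqP: Hne; apply; apply: H2.
Qed.
End Root.

Theorem mainTheorem19 (n r : nat) (alpha alphav : 'I_r -> 'rV[int]_n)
  (simple : pred 'I_r)
  (hRD : is_root_datum alpha alphav) (hB : is_base alpha simple)
  (mu mup : 'rV[int]_n)
  (hmup_orb : in_W_orbit alpha alphav mu mup)
  (hmup_dom : dominant alpha simple mup) :
  (forall j, positive_root alpha simple j -> -1 <= pair (alpha j) mu) <->
  (forall lam : 'rV[int]_n, dominant alpha simple lam ->
     coweight_le alphav simple mu lam -> coweight_le alphav simple lam mup ->
     lam = mup).
Proof. exact: (main_sec hRD hB hmup_orb hmup_dom). Qed.
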